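(* For every max-min 1-bounded space algorithm $ALG$ for the classic bin packing problem and every positive even integer $m$, there exists a sorted item sequence $I$ such that $OPT(I)=m$ and $ALG(I)\ge \frac{5}{4}\cdot OPT(I)-\frac{1}{4}$.
   Context: Classic bin packing: an item sequence $I=(a_1,\dots,a_n)\in(0,1]^n$ must be packed into bins of capacity $1$ (an assignment $f:\{1,\dots,n\}\to\mathbb{N}$ with $\sum_{i:f(i)=j}a_i\le1$ for every $j$); $OPT(I)$ is the minimum number of non-empty bins, and $ALG(I)$ is the number of non-empty bins used by algorithm $ALG$ on $I$. $I$ is sorted if $a_1\ge a_2\ge\cdots\ge a_n$. A max-min algorithm first sorts the input in non-increasing order and then repeatedly takes either the head (first, largest) or the tail (last, smallest) item of the currently remaining sorted sequence and packs it into a bin, where each decision may depend only on the items already packed and on the current head and tail items, without seeing any other remaining items. A bin is open if it already contains an item and the algorithm may still pack items into it; once closed, a bin never receives further items. A 1-bounded space algorithm keeps at most one open bin at any time, i.e. each item is packed either into the most recently opened bin or into a new bin. *)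

(* Defs.v *)
From HB Require Import structures.
From mathcomp Require Import all_boot all_order all_algebra.
From mathcomp Require Import reals.
Set Implicit Arguments. Unset Strict Implicit. Unset Printing Implicit Defensive.
Import Order.TTheory GRing.Theory Num.Theory.
Local Open Scope ring_scope.

Section BinPacking.
Variable R : realType.

Definition items_ok (I : seq R) : bool := all (fun a => (0 < a) && (a <= 1)) I.

Definition sorted_items (I : seq R) : bool := sorted (fun x y => y <= x) I.

(* A packing: an assignment f of item indices (0-based) to bins (nat) such
   that each bin has total size at most 1. *)
Definition packing (I : seq R) (f : nat -> nat) : Prop :=
  forall j : nat, \sum_(i < size I | f i == j) I`_i <= 1.

Definition nbins (I : seq R) (f : nat -> nat) : nat :=
  size (undup [seq f i | i <- iota 0 (size I)]).

Definition is_OPT (I : seq R) (m : nat) : Prop :=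
  (exists f, packing I f /\ nbins I f = m) /\
  (forall f, packing I f -> (m <= nbins I f)%N).

(* History entry of a max-min algorithm: (packed item, taken from head?,
   packed into a new bin?). *)
Definition hist_entry := (R * bool * bool)%type.

(* Given the history of packed items,
   the current head item, the current tail item, and whether head and tail
   are the same (last remaining) item, it returns
   (take the head?, open a new bin for the chosen item?).
   If it asks to put the item into the open bin but there is no open bin or
   the item does not fit, a new bin is opened (so every algorithm is valid,
   and every valid algorithm is representable). *)
Definition maxmin_alg := seq hist_entry -> R -> R -> bool -> bool * bool.

Fixpoint run (A : maxmin_alg) (fuel : nat) (s : seq R) (h : seq hist_entry)
    (load : option R) (cnt : nat) : nat :=
  match fuel with
  | 0%N => cnt
  | fuel'.+1 =>
    match s with
    | [::] => cnt
    | a :: s1 =>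
      let t := last a s1 in
      let single := (size s == 1)%N in
      let d := A h a t single in
      let x := if d.1 then a else t in
      let s' := if d.1 then s1 else take (size s).-1 s in
      match load with
      | Some l =>
          if ~~ d.2 && (l + x <= 1)
          then run A fuel' s' (rcons h (x, d.1, false)) (Some (l + x)) cnt
          else run A fuel' s' (rcons h (x, d.1, true)) (Some x) cnt.+1
      | None => run A fuel' s' (rcons h (x, d.1, true)) (Some x) cnt.+1
      end
    end
  end.

Definition ALG (A : maxmin_alg) (I : seq R) : nat := run A (size I) I [::] None 0.

End BinPacking.

(* Main.v *)
Require Import Defs.
From HB Require Import structures.
From mathcomp Require Import all_boot all_order all_algebra.
From mathcomp Require Import reals.
From mathcomp Require Import lra zify.
Import Order.TTheory GRing.Theory Num.Theory.
Local Open Scope ring_scope.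

Section Pot.
Variable R : realType.

Definition tw (n : nat) : R := n%:R / 20%:R.

Definition isbig (x : R) : bool := tw 7 <= x.
Definition nB (s : seq R) : nat := count isbig s.
Definition cap (l : option R) : nat :=
  match l with
  | None => 0%N
  | Some l => if l + tw 14 <= 1 then 2%N else if l + tw 7 <= 1 then 1%N else 0%N
  end.

Lemma tw7 : tw 7 = 7%:R / 20%:R. Proof. by []. Qed.
Lemma tw14 : tw 14 = 2 * tw 7. Proof. rewrite /tw. rewrite mulrA -natrM. by []. Qed.
Lemma tw7v : tw 7 * 20%:R = 7%:R.
Proof. rewrite /tw -mulrA mulVf ?mulr1 //. by rewrite pnatr_eq0. Qed.

Lemma cap_mono (l y : R) : 0 <= y -> leq (cap (Some (l + y))) (cap (Some l)).
Proof.
move=> y0; rewrite /cap tw14.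
have h7 : 0 < tw 7 by rewrite /tw divr_gt0 // ltr0n.
case: ifP => h1; case: ifP => h2 //; try (case: ifP => h3 //); try (case: ifP => h4 //);
 exfalso; lra.
Qed.

Lemma tw7pos : 0 < tw 7. Proof. by rewrite /tw divr_gt0 // ltr0n. Qed.
Lemma tw7gt : 1 < 3 * tw 7.
Proof. have := tw7v => h; lra. Qed.

Lemma cap_big (l x : R) : 0 <= l -> isbig x -> l + x <= 1 ->
  leq (cap (Some (l + x)%R)).+1 (cap (Some l)).
Proof.
rewrite /isbig => l0 hx hlx; rewrite /cap tw14.
have h7 := tw7pos; have h7' := tw7gt.
case: ifP => h1; first (exfalso; lra).
case: ifP => h2; case: ifP => h3 //; try (case: ifP => h4 //); exfalso; lra.
Qed.

Lemma cap_new (x : R) : (cap (Some x) + isbig x <= 2)%N.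
Proof.
rewrite /cap /isbig tw14; have h7 := tw7pos; have h7' := tw7gt.
case hb: (tw 7 <= x); repeat (case: ifP => ?); try done; exfalso; lra.
Qed.

Lemma cap_le2 l : (cap l <= 2)%N.
Proof. rewrite /cap; case: l => [l|] //; repeat (case: ifP => ?); done. Qed.

Lemma belast_take (a : R) s : take (size (a :: s)).-1 (a :: s) = belast a s.
Proof.
by rewrite /= [a :: s]lastI -cats1 take_size_cat // size_belast.
Qed.

Lemma POT (A : maxmin_alg R) fuel : forall s h l c, (size s <= fuel)%N ->
  all (fun x => 0 <= x) s -> (forall l0, l = Some l0 -> 0 <= l0) ->
  (2 * c + nB s <= 2 * run A fuel s h l c + cap l)%N.
Proof.
elim: fuel => [|f IH] s h l c.
  by case: s => //= _ _ _; rewrite /nB /=; lia.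
case: s => [|a s1] /=; first by move=> *; rewrite /nB /=; lia.
move=> hsz hall hl.
have hall0 := hall.
move: hall => /andP [ha hall].
set t := last a s1.
have hallf : all (fun x : R => 0 <= x) (a :: s1) := hall0.
have ht : 0 <= t by move/allP: hallf => H; exact: (H t (mem_last a s1)).
have hcount : nB (a :: s1) = (nB (belast a s1) + isbig t)%N.
  by rewrite /t /nB [a :: s1]lastI -cats1 count_cat /= addn0.
have hallb : all (fun x => 0 <= x) (belast a s1).
  apply/allP => y hy; have : y \in a :: s1 by rewrite lastI mem_rcons inE hy orbT.
  by move/allP: hallf => H; apply: H.
rewrite belast_take.
case: (A h a t (size (a :: s1) == 1%N)) => [d1 d2] /=.
set x := if d1 then a else t.
set s' := if d1 then s1 else belast a s1.
have hx : 0 <= x by rewrite /x; case: ifP.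
have hs' : (size s' <= f)%N by rewrite /s'; case: ifP => _; rewrite ?size_belast.
have hall' : all (fun x => 0 <= x) s' by rewrite /s'; case: ifP.
have hcnt : nB (a :: s1) = (nB s' + isbig x)%N.
  by rewrite /s' /x; case: ifP => _ //; rewrite /nB /= addnC.
rewrite -[(isbig a + nB s1)%N]/(nB (a :: s1)) hcnt.
have Hnew : (2 * c + (nB s' + isbig x) <=
    2 * run A f s' (rcons h (x, d1, true)) (Some x) c.+1 + cap l)%N.
  have := IH s' (rcons h (x, d1, true)) (Some x) c.+1 hs' hall' (fun l0 e => ltac:(by case: e => <-)).
  have := cap_new x.
  move: (run _ _ _ _ _ _) (cap (Some x)) (cap l) (nat_of_bool (isbig x)) (nB s') => r1 c1 c2 b1 n1.
  lia.
case: l hl Hnew => [l|] hl Hnew; last by [].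
have l0 := hl l erefl.
case: ifP => [/andP [_ hfit]|_]; last by [].
have := IH s' (rcons h (x, d1, false)) (Some (l + x)) c hs' hall'
  (fun l1 e => ltac:(case: e => <-; exact: addr_ge0)).
case hb: (isbig x).
  have := cap_big l x l0 hb hfit.
  move: (run _ _ _ _ _ _) (cap (Some x)) (cap (Some l)) (cap (Some (l + x))) (nB s') => r1 c1 c2 c3 n1.
  lia.
have := cap_mono l x hx.
move: (run _ _ _ _ _ _) (cap (Some x)) (cap (Some l)) (cap (Some (l + x))) (nB s') => r1 c1 c2 c3 n1.
lia.
Qed.

End Pot.

Set Implicit Arguments.

Lemma nseqSr (T : Type) n (x : T) : nseq n.+1 x = rcons (nseq n x) x.
Proof. by elim: n => //= n ->. Qed.

Section Phase.
Variable R : realType.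
Variable A : maxmin_alg R.
Variable m : nat.

Definition Mi : R := tw R 11.
Definition Si : R := tw R 7.
Definition Ti : R := tw R 2.

Definition rest k a b : seq R :=
  nseq (k - a) Mi ++ nseq (2 * m - k) Si ++ nseq (3 * m - 2 * k - b) Ti.

Record st := St { sh : seq (hist_entry R); sl : option R;
  sc : nat; sa : nat; sb : nat; smM : nat; sct : nat }.

Definition cstep (p : st) : st :=
  let d := A (sh p) Mi Ti false in
  let x := if d.1 then Mi else Ti in
  match sl p with
  | Some l =>
    if ~~ d.2 && (l + x <= 1)
    then St (rcons (sh p) (x, d.1, false)) (Some (l + x)) (sc p)
            (sa p + d.1) (sb p + ~~ d.1) (smM p + d.1) (sct p + ~~ d.1)
    else St (rcons (sh p) (x, d.1, true)) (Some x) (sc p).+1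
            (sa p + d.1) (sb p + ~~ d.1) d.1 (~~ d.1)
  | None => St (rcons (sh p) (x, d.1, true)) (Some x) (sc p).+1
            (sa p + d.1) (sb p + ~~ d.1) d.1 (~~ d.1)
  end.

Definition st0 := St [::] None 0 0 0 0 0.
Definition pth t := iter t cstep st0.

Lemma run_cstep p f s1 : last Mi s1 = Ti -> size s1 != 0%N ->
  run A f.+1 (Mi :: s1) (sh p) (sl p) (sc p) =
  run A f (if (A (sh p) Mi Ti false).1 then s1 else belast Mi s1)
      (sh (cstep p)) (sl (cstep p)) (sc (cstep p)).
Proof.
move=> hl hs.
rewrite [LHS]/= belast_take hl.
have -> : (size s1).+1 == 1%N = false by case: (size s1) hs.
rewrite /cstep; case: (A (sh p) Mi Ti false) => d1 d2 /=.
case: (sl p) => [l|] /=; last by case: d1.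
by case: ifP => _; case: d1.
Qed.

Lemma rest_cons k a b : (a < k)%N -> rest k a b = Mi :: rest k a.+1 b.
Proof. by move=> h; rewrite /rest -(subnSK h). Qed.

Lemma rest_rcons k a b : (b < 3 * m - 2 * k)%N -> rest k a b = rcons (rest k a b.+1) Ti.
Proof. by move=> h; rewrite /rest -(subnSK h) nseqSr !rcons_cat. Qed.

Lemma one_step k p : (sa p < k)%N -> (sb p < 3 * m - 2 * k)%N ->
  run A (size (rest k (sa p) (sb p))) (rest k (sa p) (sb p)) (sh p) (sl p) (sc p) =
  run A (size (rest k (sa (cstep p)) (sb (cstep p))))
        (rest k (sa (cstep p)) (sb (cstep p))) (sh (cstep p)) (sl (cstep p)) (sc (cstep p)).
Proof.
move=> ha hb.
have e1 := rest_cons k (sa p) (sb p) ha.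
have e2 := rest_rcons k (sa p) (sb p) hb.
have e3 : Mi :: rest k (sa p).+1 (sb p) = rcons (rest k (sa p) (sb p).+1) Ti by rewrite -e1.
have [hbl hla] : belast Mi (rest k (sa p).+1 (sb p)) = rest k (sa p) (sb p).+1 /\
                 last Mi (rest k (sa p).+1 (sb p)) = Ti.
  by move: e3; rewrite lastI => /rcons_inj [-> ->].
have hs : size (rest k (sa p).+1 (sb p)) != 0%N.
  move: hla; case: (rest k (sa p).+1 (sb p)) => [|? ?] //= e.
  exfalso; move: e; rewrite /Mi /Ti /tw; clear => e; lra.
rewrite e1 (run_cstep p (size (rest k (sa p).+1 (sb p)))) //.
have -> : sa (cstep p) = (sa p + (A (sh p) Mi Ti false).1)%N.
  by rewrite /cstep; case: (A _ _ _ _) => d1 d2 /=; case: (sl p) => //= l; case: ifP.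
have -> : sb (cstep p) = (sb p + ~~ (A (sh p) Mi Ti false).1)%N.
  by rewrite /cstep; case: (A _ _ _ _) => d1 d2 /=; case: (sl p) => //= l; case: ifP.
case: (A (sh p) Mi Ti false) => [[] d2] /=; rewrite ?addn1 ?addn0 //.
by rewrite -hbl size_belast.
Qed.


Lemma phase k t : (forall t', (t' < t)%N -> (sa (pth t') < k)%N /\ (sb (pth t') < 3 * m - 2 * k)%N) ->
  ALG A (rest k 0 0) = run A (size (rest k (sa (pth t)) (sb (pth t))))
    (rest k (sa (pth t)) (sb (pth t))) (sh (pth t)) (sl (pth t)) (sc (pth t)).
Proof.
elim: t => [|t IH] H; first by [].
rewrite IH; last by move=> t' ht'; apply: H; apply: ltn_trans ht' _.
have [h1 h2] := H t (ltnSn t).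
by rewrite one_step // /pth iterS.
Qed.

Lemma cstep_ab p : sa (cstep p) = (sa p + (A (sh p) Mi Ti false).1)%N /\
                   sb (cstep p) = (sb p + ~~ (A (sh p) Mi Ti false).1)%N.
Proof.
by rewrite /cstep; case: (A _ _ _ _) => d1 d2 /=; case: (sl p) => //= l; case: ifP.
Qed.

Lemma pth_mono t1 t2 : (t1 <= t2)%N ->
  (sa (pth t1) <= sa (pth t2))%N /\ (sb (pth t1) <= sb (pth t2))%N.
Proof.
move=> /subnK <-; elim: (t2 - t1)%N => [|d [IH1 IH2]]; first by [].
have -> : pth (d.+1 + t1) = cstep (pth (d + t1)) by rewrite addSn /pth iterS.
have [-> ->] := cstep_ab (pth (d + t1)).
lia.
Qed.

Lemma pth_sum t : (sa (pth t) + sb (pth t))%N = t.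
Proof.
elim: t => [|t IH]; first by [].
have -> : pth t.+1 = cstep (pth t) by rewrite /pth iterS.
have [-> ->] := cstep_ab (pth t).
case: (A _ _ _ _).1 => /=; lia.
Qed.


Lemma tw_add a b : tw R a + tw R b = tw R (a + b).
Proof. by rewrite /tw natrD mulrDl. Qed.

Lemma tw_le1 n : (tw R n <= 1) = (n <= 20)%N.
Proof. by rewrite /tw ler_pdivrMr ?ltr0n // mul1r ler_nat. Qed.

Definition INV (p : st) :=
  sl p = Some (tw R (11 * smM p + 2 * sct p)) /\ (smM p <= 1)%N /\
  (11 * smM p + 2 * sct p <= 20)%N /\ (smM p = 0%N -> 1 <= sct p)%N /\
  (12 + 8 * sa p + sb p <= 12 * sc p + 8 * smM p + sct p)%N /\
  (sa p + 1 <= sc p + smM p)%N.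

Lemma inv_step p : (sl p = None /\ sc p = 0%N /\ sa p = 0%N /\ sb p = 0%N) \/ INV p -> INV (cstep p).
Proof.
rewrite /INV /cstep; case: (A _ _ _ _) => d1 d2 /=.
have hx : (if d1 then Mi else Ti) = tw R (if d1 then 11 else 2).
  by case: d1.
rewrite hx; clear hx.
case=> [[-> [hc [ha hb]]]|[-> [h1 [h2 [h3 [h4 h5]]]]]] /=.
  rewrite hc ha hb; case: d1 => /=; split; try (congr Some; congr tw; lia); lia.
rewrite tw_add tw_le1.
case: ifP => /= [/andP [_ hfit]|_].
  split; first by congr Some; congr tw; case: d1 hfit => /=; lia.
  case: d1 hfit => /= hfit; lia.
split; first by congr Some; congr tw; case: d1 => /=; lia.
case: d1 => /=; lia.
Qed.

Lemma inv_pth t : (0 < t)%N -> INV (pth t).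
Proof.
case: t => // t _; elim: t => [|t IH].
  by apply: inv_step; left.
have -> : pth t.+2 = cstep (pth t.+1) by rewrite /pth iterS.
by apply: inv_step; right.
Qed.

End Phase.

Unset Implicit Arguments.

Section Bound.
Variable R : realType.
Variable A : maxmin_alg R.
Variable m : nat.

Lemma tw_le a b : (tw R a <= tw R b) = (a <= b)%N.
Proof. by rewrite /tw ler_pM2r ?invr_gt0 ?ltr0n // ler_nat. Qed.

Lemma tw_ge0 a : 0 <= tw R a.
Proof. by rewrite /tw divr_ge0 // ler0n. Qed.

Lemma nB_rest k a b : (a <= k)%N -> (k <= m)%N -> nB R (rest R m k a b) = (k - a + (2 * m - k))%N.
Proof.
move=> ha hk; rewrite /nB /rest !count_cat !count_nseq /isbig /Mi /Si /Ti !tw_le /=.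
lia.
Qed.

Lemma rest_ge0 k a b : all (fun x => 0 <= x) (rest R m k a b).
Proof.
by rewrite /rest !all_cat !all_nseq /Mi /Si /Ti !tw_ge0 !orbT.
Qed.

Lemma cap_tw L : cap R (Some (tw R L)) = if (L + 14 <= 20)%N then 2%N else if (L + 7 <= 20)%N then 1%N else 0%N.
Proof. by rewrite /cap !tw_add !tw_le1. Qed.

Lemma alg_bound k t : (0 < t)%N -> (k <= m)%N ->
  (forall t', (t' < t)%N -> (sa (pth A t') < k)%N /\ (sb (pth A t') < 3 * m - 2 * k)%N) ->
  (sa (pth A t) <= k)%N -> (sb (pth A t) <= 3 * m - 2 * k)%N ->
  (3 * m - 2 <= 2 * sa (pth A t) + sb (pth A t))%N \/ (m <= sa (pth A t))%N ->
  (5 * m <= 4 * ALG A (rest R m k 0 0) + 1)%N.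
Proof.
move=> t0 hk hph ha hb hgood.
rewrite (phase A m k t hph).
have [hl [h1 [h2 [h3 [h4 h5]]]]] := inv_pth A t t0.
set p := pth A t in hl h1 h2 h3 h4 h5 ha hb hgood *.
have := POT R A (size (rest R m k (sa p) (sb p))) (rest R m k (sa p) (sb p))
   (sh p) (sl p) (sc p) (leqnn _) (rest_ge0 _ _ _)
   (fun l0 e => ltac:(by rewrite hl in e; case: e => <-; apply: tw_ge0)).
rewrite nB_rest // hl cap_tw.
move: (run _ _ _ _ _ _) => r.
move: (sa p) (sb p) (sc p) (smM p) (sct p) ha hb hgood h1 h2 h3 h4 h5 => a b c mM ct.
move=> ha hb hgood h1 h2 h3 h4 h5.
case: ifP => c1; [|case: ifP => c2]; lia.
Qed.


Lemma exists_k : (0 < m)%N -> exists k, (0 < k <= m)%N /\ (5 * m <= 4 * ALG A (rest R m k 0 0) + 1)%N.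
Proof.
move=> m0.
pose P t := (3 * m - 2 <= 2 * sa (pth A t) + sb (pth A t))%N || (m <= sa (pth A t))%N.
have exP : exists t, P t.
  exists (3 * m)%N; apply/orP; left; have := pth_sum A (3 * m); lia.
case: (ex_minnP exP) => ts Pts Pmin.
have ts0 : (0 < ts)%N.
  case: ts Pts Pmin => // ; rewrite /P /pth /=; lia.
move: Pts Pmin; case: ts ts0 => // t' _ Pts Pmin.
have nP : ~~ P t'.
  apply/negP => Pt; have := Pmin t' Pt; lia.
have e : pth A t'.+1 = cstep A (pth A t') by rewrite /pth iterS.
have [ea eb] := cstep_ab A (pth A t').
rewrite /P e ea eb in Pts nP.
move: ea eb Pts nP.
set a' := sa (pth A t'); set b' := sb (pth A t').
set d := (A _ _ _ _).1 => ea eb Pts nP.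
have mono : forall t'', (t'' < t'.+1)%N -> (sa (pth A t'') <= a')%N /\ (sb (pth A t'') <= b')%N.
  by move=> t'' h; apply: pth_mono.
exists a'.+1; split; first by move: nP; lia.
apply: (@alg_bound a'.+1 t'.+1 (ltn0Sn _)).
- by move: nP; lia.
- move=> t'' h; have [u v] := mono t'' h; split; first lia.
  by move: nP; lia.
- by rewrite e ea; case: (d); rewrite /= ?addn1 ?addn0.
- by rewrite e eb; move: nP; case: (d) => /=; lia.
- by rewrite e ea eb; move: Pts; case: (d) => /= /orP; lia.
Qed.

End Bound.

Set Implicit Arguments.

Definition fS k s := if (s < k)%N then s else (k + (s - k) %/ 2)%N.
Definition fT k t := if (t < k)%N then t else (k + (t - k) %/ 3)%N.
Definition fpk m k i :=
  if (i < k)%N then i else if (i < 2 * m)%N then fS k (i - k) else fT k (i - 2 * m).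

Section Opt.
Variable R : realType.

Lemma partition_sum (F : nat -> R) (f : nat -> nat) n :
  \sum_(i < n) F i =
  \sum_(j <- undup [seq f i | i <- iota 0 n]) \sum_(i < n | f i == j) F i.
Proof.
set J := undup _.
under [RHS]eq_bigr => j _ do rewrite big_mkcond /=.
rewrite exchange_big /=; apply: eq_bigr => i _.
have hi : f i \in J by rewrite mem_undup; apply: map_f; rewrite mem_iota /= add0n ltn_ord.
rewrite (bigD1_seq (f i)) ?undup_uniq //= eqxx big1 ?addr0 //.
by move=> j /negbTE; rewrite eq_sym => ->.
Qed.

Lemma sum_le_nbins (I : seq R) f : packing I f -> \sum_(i < size I) I`_i <= (nbins I f)%:R.
Proof.
move=> hp; rewrite (partition_sum (fun i => I`_i) f) /nbins.
set J := undup _.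
apply: le_trans (_ : \sum_(j <- J) 1 <= _).
  by apply: ler_sum => j _; apply: hp.
by rewrite big_const_seq iter_addr_0 count_predT.
Qed.


Lemma tw_muln a n : tw R a *+ n = tw R (a * n).
Proof. by rewrite /tw -mulrnAl natrM mulr_natr. Qed.

Lemma sum_nseq n (c : R) : \sum_(x <- nseq n c) x = c *+ n.
Proof. by rewrite big_nseq iter_addr_0. Qed.

Lemma sum_seq_ord (I : seq R) : \sum_(i < size I) I`_i = \sum_(x <- I) x.
Proof. by rewrite (big_nth 0) big_mkord. Qed.

Lemma tw20 m : tw R (20 * m) = m%:R.
Proof. by rewrite /tw natrM mulrAC divff ?mul1r // pnatr_eq0. Qed.

Lemma total_rest m k : (k <= m)%N -> \sum_(i < size (rest R m k 0 0)) (rest R m k 0 0)`_i = m%:R.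
Proof.
move=> hk; rewrite sum_seq_ord /rest !big_cat /= !sum_nseq /Mi /Si /Ti !tw_muln !tw_add.
rewrite -tw20; congr tw; lia.
Qed.

Lemma count_win (P : pred nat) s c q : uniq s ->
  (forall i, i \in s -> P i -> c <= i < c + q)%N -> (count P s <= q)%N.
Proof.
move=> us hw; rewrite -size_filter.
have := @uniq_leq_size _ (filter P s) (iota c q) (filter_uniq P us).
rewrite size_iota; apply => x; rewrite mem_filter mem_iota => /andP [px xs].
by have := hw x xs px; lia.
Qed.


Lemma size_rest m k : (k <= m)%N -> size (rest R m k 0 0) = (5 * m - 2 * k)%N.
Proof. by move=> hk; rewrite /rest !size_cat !size_nseq; lia. Qed.

Lemma nth_rest m k i : (k <= m)%N -> (i < 5 * m - 2 * k)%N ->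
  (rest R m k 0 0)`_i = if (i < k)%N then Mi R else if (i < 2 * m)%N then Si R else Ti R.
Proof.
move=> hk hi; rewrite /rest !nth_cat !size_nseq !nth_nseq !subn0.
case: (ltnP i k) => h1 //.
case: (ltnP i (2 * m)) => h2.
  have c : (i - k < 2 * m - k)%N by lia.
  by rewrite c.
have c : (i - k < 2 * m - k)%N = false by apply/negbTE; rewrite -leqNgt; lia.
have c' : (i - k - (2 * m - k) < 3 * m - 2 * k)%N by lia.
by rewrite c c'.
Qed.

Lemma range_sum (F : nat -> R) (P : pred nat) lo hi c :
  (forall i, (lo <= i < hi)%N -> F i = c) ->
  \sum_(lo <= i < hi | P i) F i = c *+ count P (index_iota lo hi).
Proof.
move=> hF; rewrite big_nat_cond (eq_bigr (fun _ => c)); last by move=> i /andP [/hF -> _].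
rewrite big_const_seq iter_addr_0; congr (_ *+ _).
by apply: eq_in_count => i; rewrite mem_index_iota => ->.
Qed.

Lemma pack_rest m k : (k <= m)%N -> packing (rest R m k 0 0) (fpk m k).
Proof.
move=> hk j; rewrite size_rest // -(big_mkord (fun i => fpk m k i == j) (fun i => (rest R m k 0 0)`_i)).
rewrite (big_cat_nat _ (n := k)) //=; last by lia.
rewrite [\sum_(k <= i < _ | _) _](big_cat_nat _ (n := (2 * m)%N)) //=; try lia.
rewrite (@range_sum _ _ _ _ (Mi R)); last first.
  by move=> i hi; rewrite nth_rest; try lia; repeat (case: ifP => ?); try done; exfalso; lia.
rewrite (@range_sum _ _ _ _ (Si R)); last first.
  by move=> i hi; rewrite nth_rest; try lia; repeat (case: ifP => ?); try done; exfalso; lia.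
rewrite (@range_sum _ _ _ _ (Ti R)); last first.
  by move=> i hi; rewrite nth_rest; try lia; repeat (case: ifP => ?); try done; exfalso; lia.
rewrite /Mi /Si /Ti !tw_muln !tw_add tw_le1.
set c1 := count _ _; set c2 := count _ _; set c3 := count _ _.
have u1 : forall lo hi, uniq (index_iota lo hi) by move=> lo hi; exact: iota_uniq.
case: (ltnP j k) => hj.
  have h1 : (c1 <= 1)%N.
    apply: (@count_win _ _ j) => // i; rewrite mem_index_iota /fpk => hi /eqP.
    rewrite ifT; lia.
  have h2 : (c2 <= 1)%N.
    apply: (@count_win _ _ (k + j)%N) => // i; rewrite mem_index_iota /fpk /fS => hi /eqP.
    rewrite ifF; last lia. rewrite ifT; last lia. case: ifP; lia.
  have h3 : (c3 <= 1)%N.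
    apply: (@count_win _ _ (2 * m + j)%N) => // i; rewrite mem_index_iota /fpk /fT => hi /eqP.
    rewrite ifF; last lia. rewrite ifF; last lia. case: ifP; lia.
  lia.
have h1 : (c1 <= 0)%N.
  apply: (@count_win _ _ 0%N) => // i; rewrite mem_index_iota /fpk => hi /eqP.
  rewrite ifT; lia.
have h2 : (c2 <= 2)%N.
  apply: (@count_win _ _ (2 * j)%N) => // i; rewrite mem_index_iota /fpk /fS => hi /eqP.
  rewrite ifF; last lia. rewrite ifT; last lia. case: ifP; lia.
have h3 : (c3 <= 3)%N.
  apply: (@count_win _ _ (2 * m + 3 * j - 2 * k)%N) => // i; rewrite mem_index_iota /fpk /fT => hi /eqP.
  rewrite ifF; last lia. rewrite ifF; last lia. case: ifP; lia.
lia.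
Qed.


Lemma nbins_rest m k : (k <= m)%N -> nbins (rest R m k 0 0) (fpk m k) = m.
Proof.
move=> hk; rewrite /nbins size_rest //.
have pe : perm_eq (undup [seq fpk m k i | i <- iota 0 (5 * m - 2 * k)]) (iota 0 m).
  apply: uniq_perm; [exact: undup_uniq | exact: iota_uniq|] => x.
  rewrite mem_undup mem_iota /= add0n; apply/mapP/idP.
    case=> i; rewrite mem_iota /= add0n => hi ->; rewrite /fpk /fS /fT.
    repeat (case: ifP => ?); lia.
  move=> hx; case: (ltnP x k) => hxk.
    by exists x; rewrite ?mem_iota /fpk ?hxk //=; lia.
  exists (2 * x)%N; first by rewrite mem_iota; lia.
  rewrite /fpk /fS ifF; last by lia.
  rewrite ifT; last by lia.
  rewrite ifF; last by lia.
  lia.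
by rewrite (perm_size pe) size_iota.
Qed.

Lemma opt_rest m k : (k <= m)%N -> is_OPT (rest R m k 0 0) m.
Proof.
move=> hk; split.
  by exists (fpk m k); split; [exact: pack_rest | exact: nbins_rest].
move=> f hp; have := sum_le_nbins hp; rewrite total_rest // ler_nat; exact.
Qed.

Lemma items_ok_rest m k : items_ok (rest R m k 0 0).
Proof.
rewrite /items_ok /rest !all_cat !all_nseq /Mi /Si /Ti !tw_le1 /=.
have p : forall n, (0 < n)%N -> 0 < tw R n by move=> n hn; rewrite /tw divr_gt0 // ltr0n.
by rewrite !p ?orbT.
Qed.

Lemma pairwise_nseq_refl (T : Type) (r : rel T) n x : r x x -> pairwise r (nseq n x).
Proof. by move=> hx; elim: n => //= n ->; rewrite all_nseq hx orbT. Qed.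

Lemma allrel_nseq (T : Type) (r : rel T) a b x y : r x y -> allrel r (nseq a x) (nseq b y).
Proof. by move=> h; rewrite /allrel all_nseq /= all_nseq h !orbT. Qed.

Lemma sorted_rest m k : sorted_items (rest R m k 0 0).
Proof.
rewrite /sorted_items sorted_pairwise; last first.
  by move=> y x z hxy hyz; apply: le_trans hyz hxy.
rewrite /rest !pairwise_cat !allrel_catr !allrel_nseq ?pairwise_nseq_refl //;
  by rewrite /Mi /Si /Ti tw_le.
Qed.

End Opt.

Unset Implicit Arguments.

Theorem theorem2 (R : realType) (A : maxmin_alg R) (m : nat) :
  (0 < m)%N -> ~~ odd m ->
  exists I : seq R,
    [/\ items_ok I, sorted_items I, is_OPT I m &
        (5 / 4) * (m%:R : R) - 1 / 4 <= (ALG A I)%:R].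
Proof.
move=> m0 _.
have [k [hk hb]] := @exists_k R A m m0.
exists (rest R m k 0 0); split.
- exact: items_ok_rest.
- exact: sorted_rest.
- by apply: opt_rest; case/andP: hk.
- have : ((5 * m)%:R <= (4 * ALG A (rest R m k 0 0) + 1)%:R :> R) by rewrite ler_nat.
  rewrite !natrD; lra.
Qed.
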